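(* For $z\in\mathbb R$ let \[p_1(z)=-7+30z-24z^2-14z^3+12z^4-6z^5+2z^6,\] \[p_2(z)=81-324z+1188z^2-1404z^3-216z^4+1404z^5-972z^6+432z^7-108z^8,\] \[\mathcal Q(z)=\frac13(z^2-z+1)-\frac{\sqrt[3]{2}\,(3-(z^2-z+1)^2)}{3\sqrt[3]{p_1(z)+\sqrt{p_2(z)}}}+\frac{\sqrt[3]{p_1(z)+\sqrt{p_2(z)}}}{3\sqrt[3]{2}},\] and for $0\le u\le v\le1/2$ let \[\xi(u,v)=\frac{(2-u)^{2-u}(1+u)^{1+u}}{4u^{3u}v^v(1-v-u)^{1-v-u}(v-u)^{v-u}(1-v)^{1-v}(1-u)^{1-u}}.\] Define $h\colon[0,1/2)\to\mathbb R$ by \[h(v)=\xi(\mathcal Q(v),v)\frac{(2-2v)^{2-2v}}{(1-2v)^{1-2v}}.\] Then $h(v)<21.97225$ for all $v\in[0,1/2)$.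
   Context: The convention $0^0=1$ is used. *)

(* Defs.v *)
From Stdlib Require Import Reals.
Open Scope R_scope.

(* Real power with the convention 0^0 = 1 (0^y = 0 for y <> 0);
   for x > 0 it is x^y = exp (y ln x). Only used with x >= 0. *)
Definition rpow (x y : R) : R :=
  if Req_EM_T x 0 then (if Req_EM_T y 0 then 1 else 0) else Rpower x y.

Definition cbrt (x : R) : R :=
  if Rlt_dec x 0 then - Rpower (- x) (1/3)
  else if Req_EM_T x 0 then 0 else Rpower x (1/3).

Definition p1 (z : R) : R :=
  -7 + 30*z - 24*z^2 - 14*z^3 + 12*z^4 - 6*z^5 + 2*z^6.

Definition p2 (z : R) : R :=
  81 - 324*z + 1188*z^2 - 1404*z^3 - 216*z^4 + 1404*z^5 - 972*z^6
  + 432*z^7 - 108*z^8.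

Definition Qf (z : R) : R :=
  (1/3) * (z^2 - z + 1)
  - cbrt 2 * (3 - (z^2 - z + 1)^2) / (3 * cbrt (p1 z + sqrt (p2 z)))
  + cbrt (p1 z + sqrt (p2 z)) / (3 * cbrt 2).

Definition xi (u v : R) : R :=
  (rpow (2 - u) (2 - u) * rpow (1 + u) (1 + u)) /
  (4 * rpow u (3 * u) * rpow v v * rpow (1 - v - u) (1 - v - u)
     * rpow (v - u) (v - u) * rpow (1 - v) (1 - v) * rpow (1 - u) (1 - u)).

Definition h (v : R) : R :=
  xi (Qf v) v * (rpow (2 - 2*v) (2 - 2*v) / rpow (1 - 2*v) (1 - 2*v)).

(* Main.v *)
Require Import Defs.
From Stdlib Require Import Reals Lra Psatz.
From Coquelicot Require Import Coquelicot.
Open Scope R_scope.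


Lemma mono0 (f df : R -> R) (b : R) :
  (forall x, 0 <= x <= b -> is_derive f x (df x)) ->
  (forall x, 0 <= x <= b -> 0 <= df x) ->
  forall t, 0 <= t <= b -> f 0 <= f t.
Proof.
intros Hd Hp t Ht.
destruct (Req_dec t 0) as [->|Ht0]; [lra|].
destruct (Rle_or_lt (f 0) (f t)) as [H|H]; [exact H|exfalso].
set (e := (f 0 - f t) / (2 * t)).
assert (He : 0 < e) by (unfold e; apply Rdiv_lt_0_compat; lra).
assert (Hi := incr_function_le (fun x => f x + e * x) 0 b (fun x => df x + e)).
assert (Hlt : f 0 + e * 0 < f t + e * t).
{ apply (Hi); simpl; try lra.

  - intros x Hx1 Hx2.
    simpl. apply (is_derive_plus (K:=R_AbsRing) (V:=R_NormedModule) f (fun x => e * x)). apply Hd; simpl in *; lra.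
    clearbody e. auto_derive. all: try ring; auto.
  - intros x Hx1 Hx2. simpl in *. specialize (Hp x (conj Hx1 Hx2)). lra. }
assert (e*t = (f 0 - f t)/2) by (unfold e; field; lra). lra.
Qed.

Definition S5 (t : R) := t + t^3/3 + t^5/5 + t^7/7 + t^9/9.

Lemma atanh_lo t : 0 <= t < 1 -> 2 * S5 t <= ln (1+t) - ln (1-t).
Proof.
intros Ht.
assert (H := mono0 (fun x => ln (1+x) - ln (1-x) - 2 * S5 x)
   (fun x => 2 * x^10 / (1 - x^2)) t).
assert (H0 : ln (1+0) - ln (1-0) - 2 * S5 0 <= ln (1+t) - ln (1-t) - 2 * S5 t).
{ apply H; try lra.
  - intros x Hx. unfold S5. auto_derive. lra. field. split; nra.
  - intros x Hx. apply Rmult_le_pos. apply Rmult_le_pos; [lra| apply pow_le; lra].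
    apply Rlt_le, Rinv_0_lt_compat. nra. }
replace (1+0) with 1 in H0 by ring. replace (1-0) with 1 in H0 by ring. rewrite ln_1 in H0.
unfold S5 in H0 at 1. lra.
Qed.

Lemma atanh_hi t : 0 <= t < 1 ->
  ln (1+t) - ln (1-t) <= 2 * S5 t + 2 * t^11 / (11 * (1 - t^2)).
Proof.
intros Ht.
assert (H := mono0 (fun x => 2 * S5 x + 2 * x^11 / (11 * (1 - x^2)) - (ln (1+x) - ln (1-x)))
   (fun x => 4 * x^12 / (11 * (1 - x^2)^2)) t).
assert (H0 : 2 * S5 0 + 2 * 0^11 / (11 * (1 - 0^2)) - (ln (1+0) - ln (1-0)) <=
     2 * S5 t + 2 * t^11 / (11 * (1 - t^2)) - (ln (1+t) - ln (1-t))).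
{ apply H; try lra.
  - intros x Hx. unfold S5. auto_derive. repeat split; try lra; nra. field. split; nra.
  - intros x Hx. apply Rmult_le_pos. apply Rmult_le_pos; [lra| apply pow_le; lra].
    apply Rlt_le, Rinv_0_lt_compat. assert (0 < 1 - x^2) by nra. nra. }
replace (1+0) with 1 in H0 by ring. replace (1-0) with 1 in H0 by ring. rewrite ln_1 in H0.
unfold S5 in H0 at 1. replace (2 * 0 ^ 11 / (11 * (1 - 0 ^ 2))) with 0 in H0 by field. lra.
Qed.

Lemma ln2_bounds : 6931471766/10000000000 <= ln 2 <= 6931471806/10000000000.
Proof.
assert (E : 2 = ((1+1/5)/(1-1/5)) * ((1+1/7)/(1-1/7))) by field.
assert (L : ln 2 = (ln (1+1/5) - ln (1-1/5)) + (ln (1+1/7) - ln (1-1/7))).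
{ rewrite E at 1. rewrite ln_mult, !ln_div; try lra.
  all: apply Rdiv_lt_0_compat; lra. }
rewrite L.
pose proof (atanh_lo (1/5)) as A1. pose proof (atanh_hi (1/5)) as A2.
pose proof (atanh_lo (1/7)) as A3. pose proof (atanh_hi (1/7)) as A4.
unfold S5 in *. split; lra.
Qed.

Lemma ln_decomp k t : -1 < t < 1 ->
  ln (2^k * ((1+t)/(1-t))) = INR k * ln 2 + (ln (1+t) - ln (1-t)).
Proof.
intros Ht. rewrite ln_mult, ln_pow, ln_div; try lra.
apply pow_lt; lra. apply Rdiv_lt_0_compat; lra.
Qed.

Lemma ln_decomp_neg k s : -1 < s < 1 ->
  ln (2^k * ((1-s)/(1+s))) = INR k * ln 2 - (ln (1+s) - ln (1-s)).
Proof.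
intros Hs. rewrite ln_mult, ln_pow, ln_div; try lra.
apply pow_lt; lra. apply Rdiv_lt_0_compat; lra.
Qed.

Lemma ln_r1 : ln (175023/100000) <= (6996840099/12500000000).
Proof.
replace (175023/100000) with (2^1 * ((1 - (24977/375023))/(1 + (24977/375023)))) by field.
rewrite ln_decomp_neg by lra.
pose proof (atanh_lo (24977/375023) ltac:(lra)). pose proof ln2_bounds. unfold S5 in *. simpl INR. lra.
Qed.

Lemma ln_r2 : ln (58323/25000) <= (21178017547/25000000000).
Proof.
replace (58323/25000) with (2^1 * ((1 + (8323/108323))/(1 - (8323/108323)))) by field.
rewrite ln_decomp by lra.
pose proof (atanh_hi (8323/108323) ltac:(lra)). pose proof ln2_bounds. unfold S5 in *. simpl INR. lra.
Qed.

Lemma ln_r3 : ln (124977/100000) <= (22295953439/100000000000).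
Proof.
replace (124977/100000) with (2^0 * ((1 + (24977/224977))/(1 - (24977/224977)))) by field.
rewrite ln_decomp by lra.
pose proof (atanh_hi (24977/224977) ltac:(lra)). pose proof ln2_bounds. unfold S5 in *. simpl INR. lra.
Qed.

Lemma ln_r4 : ln (31273/6250) <= (8050868209/5000000000).
Proof.
replace (31273/6250) with (2^2 * ((1 + (6273/56273))/(1 - (6273/56273)))) by field.
rewrite ln_decomp by lra.
pose proof (atanh_hi (6273/56273) ltac:(lra)). pose proof ln2_bounds. unfold S5 in *. simpl INR. lra.
Qed.

Lemma ln_r5 : ln (25023/6250) <= (69360696913/50000000000).
Proof.
replace (25023/6250) with (2^2 * ((1 + (23/50023))/(1 - (23/50023)))) by field.
rewrite ln_decomp by lra.
pose proof (atanh_hi (23/50023) ltac:(lra)). pose proof ln2_bounds. unfold S5 in *. simpl INR. lra.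
Qed.

Lemma ln_r6 : ln (18653/10000) <= (62342189811/100000000000).
Proof.
replace (18653/10000) with (2^1 * ((1 - (1347/38653))/(1 + (1347/38653)))) by field.
rewrite ln_decomp_neg by lra.
pose proof (atanh_lo (1347/38653) ltac:(lra)). pose proof ln2_bounds. unfold S5 in *. simpl INR. lra.
Qed.

Lemma ln_r7 : ln (215567/100000) <= (15362031603/20000000000).
Proof.
replace (215567/100000) with (2^1 * ((1 + (15567/415567))/(1 - (15567/415567)))) by field.
rewrite ln_decomp by lra.
pose proof (atanh_hi (15567/415567) ltac:(lra)). pose proof ln2_bounds. unfold S5 in *. simpl INR. lra.
Qed.

Lemma ln_r8 : ln (115383/50000) <= (16724680483/20000000000).
Proof.
replace (115383/50000) with (2^1 * ((1 + (15383/215383))/(1 - (15383/215383)))) by field.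
rewrite ln_decomp by lra.
pose proof (atanh_hi (15383/215383) ltac:(lra)). pose proof ln2_bounds. unfold S5 in *. simpl INR. lra.
Qed.

Lemma ln_r9 : ln (1489869/100000) <= (270127328979/100000000000).
Proof.
replace (1489869/100000) with (2^4 * ((1 - (110131/3089869))/(1 + (110131/3089869)))) by field.
rewrite ln_decomp_neg by lra.
pose proof (atanh_lo (110131/3089869) ltac:(lra)). pose proof ln2_bounds. unfold S5 in *. simpl INR. lra.
Qed.

Lemma ln_T : (154489013871/50000000000) <= ln (87889/4000).
Proof.
replace (87889/4000) with (2^4 * ((1 + (23889/151889))/(1 - (23889/151889)))) by field.
rewrite ln_decomp by lra.
pose proof (atanh_lo (23889/151889) ltac:(lra)). pose proof ln2_bounds. unfold S5 in *. simpl INR. lra.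
Qed.

Lemma cbrt_pos x : 0 < x -> 0 < cbrt x /\ cbrt x ^ 3 = x.
Proof.
intros Hx. unfold cbrt.
destruct (Rlt_dec x 0); [lra|].
destruct (Req_EM_T x 0); [lra|].
split. apply exp_pos.

rewrite <- Rpower_pow by apply exp_pos.
rewrite Rpower_mult. replace (1/3 * INR 3) with 1 by (simpl; field).
apply Rpower_1; lra.
Qed.

Lemma Q_cubic v : 0 <= v <= 1 ->
  (Qf v)^3 - (v^2 - v + 1)*(Qf v)^2 + Qf v - (1 - (v^2 - v + 1)) = 0.
Proof.
intros Hv.
assert (Hb : 3/4 <= v^2 - v + 1 <= 1).
{ pose proof (pow2_ge_0 (v - 1/2)). assert (0 <= v*(1-v)) by (apply Rmult_le_pos; lra). split; nra. }
set (u := Qf v). set (b := v^2 - v + 1) in *.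
set (m := 3 - b^2).
assert (Hm : 2 <= m) by (unfold m; nra).
assert (Hp1 : p1 v = 2*b^3 - 36*b + 27) by (unfold p1, b; ring).
assert (Hp2 : p2 v = (p1 v)^2 + 4*m^3) by (unfold p2, p1, m, b; ring).
set (r := sqrt (p2 v)).
assert (Hm3 : 0 < m^3) by (apply pow_lt; lra).
assert (Hr2 : r^2 = p2 v) by (unfold r; simpl; rewrite Rmult_1_r; apply sqrt_sqrt; rewrite Hp2; nra).
assert (Hr0 : 0 <= r) by apply sqrt_pos.
set (s := p1 v + r).
assert (Hs : 0 < s).
{ unfold s. destruct (Rle_or_lt 0 (p1 v)).
  - assert (0 < r) by (destruct (Rle_lt_or_eq_dec 0 r Hr0); [lra| rewrite Hp2 in Hr2; nra]). lra.
  - rewrite Hp2 in Hr2. nra. }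
destruct (cbrt_pos s Hs) as [Hc0 Hc3].
destruct (cbrt_pos 2 ltac:(lra)) as [Hk0 Hk3].
set (c := cbrt s) in *. set (k := cbrt 2) in *.
assert (Hu : u = b/3 - k*m/(3*c) + c/(3*k)).
{ unfold u, Qf. change (sqrt (p2 v)) with r. change (p1 v + r) with s. change (cbrt s) with c. change (cbrt 2) with k. change (v^2-v+1) with b. unfold m. field. lra. }
set (q := -2*b^3/27 + b/3 - (1-b)).
assert (Key : u^3 - b*u^2 + u - (1 - b) =
   ((c^3/k^3)^2 + 27*q*(c^3/k^3) - m^3) / (27*(c^3/k^3))).
{ rewrite Hu. unfold q, m. field. lra. }
rewrite Key, Hc3, Hk3.
replace ((s / 2) ^ 2 + 27 * q * (s / 2) - m ^ 3) with 0. field. lra.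
unfold s, q. rewrite Hp2 in Hr2. rewrite Hp1 in *. nra.
Qed.

Lemma cubic_root_range v u : 0 <= v < 1/2 ->
  u^3 - (v^2 - v + 1)*u^2 + u - (1 - (v^2 - v + 1)) = 0 ->
  (v = 0 -> u = 0) /\ (0 < v -> 0 < u < v).
Proof.
intros Hv Hc.
set (b := v^2 - v + 1) in *.
assert (Hb : 3/4 <= b <= 1).
{ pose proof (pow2_ge_0 (v - 1/2)). assert (0 <= v*(1-v)) by (apply Rmult_le_pos; lra). unfold b; split; nra. }
assert (Hq : forall x, 0 < x^2 - b*x + 1).
{ intros x. pose proof (pow2_ge_0 (x - b/2)). nra. }
assert (Hf : u * (u^2 - b*u + 1) = 1 - b) by nra.
split.
- intros ->. assert (b = 1) by (unfold b; ring). subst. 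
  pose proof (Hq u). assert (u * (u ^ 2 - b * u + 1) = 0) by (rewrite Hf; lra).
  apply Rmult_integral in H1. destruct H1; [auto|lra].
- intros Hv0. assert (Ha : 0 < 1 - b) by (unfold b; nra).
  split.
  + pose proof (Hq u). destruct (Rle_or_lt u 0); [|auto]. nra.
  + destruct (Rlt_or_le u v); [auto|exfalso].
    assert (Hg : 0 < u^2 + u*v + v^2 - b*(u+v) + 1).
    { pose proof (pow2_ge_0 (u - v)). pose proof (pow2_ge_0 (u + v - 2*b/3)). nra. }
    assert (E : u^3 - b*u^2 + u - (1-b) = (u - v)*(u^2 + u*v + v^2 - b*(u+v) + 1) + (2*v^3 - v^4)).
    { unfold b; ring. }
    assert (0 <= (u - v)*(u^2 + u*v + v^2 - b*(u+v) + 1)) by (apply Rmult_le_pos; lra).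
    assert (0 < 2*v^3 - v^4). { assert (0 < v^3) by (apply pow_lt; lra). replace (2*v^3 - v^4) with (v^3*(2 - v)) by ring. nra. }
    lra.
Qed.

Lemma ln_le_sub1 y : 0 < y -> ln y <= y - 1.
Proof. intros Hy. pose proof (exp_ineq1_le (ln y)). rewrite exp_ln in H by lra. lra. Qed.

Lemma tang x z r hi : 0 < x -> 0 < z -> 0 < r -> ln r <= hi ->
  x * (ln z - ln x) <= x * hi + z / r - x.
Proof.
intros Hx Hz Hr Hh.
assert (E : ln z - ln x - ln r = ln (z / (x * r))).
{ rewrite ln_div, ln_mult; try lra. apply Rmult_lt_0_compat; lra. }
assert (L := ln_le_sub1 (z / (x * r))).
assert (0 < z / (x*r)) by (apply Rdiv_lt_0_compat; [lra| apply Rmult_lt_0_compat; lra]).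
specialize (L H).
assert (x * (ln z - ln x - ln r) <= x * (z / (x * r) - 1)) by (rewrite E; apply Rmult_le_compat_l; lra).
assert (x * (z / (x * r) - 1) = z / r - x) by (field; lra).
assert (x * ln r <= x * hi) by (apply Rmult_le_compat_l; lra).
nra.
Qed.

Lemma rpow_pos x y : 0 < x -> rpow x y = exp (y * ln x).
Proof. intros Hx. unfold rpow. destruct (Req_EM_T x 0); [lra| reflexivity]. Qed.

Lemma rpow00 : rpow 0 0 = 1.
Proof. unfold rpow. destruct (Req_EM_T 0 0); [|lra]. reflexivity. Qed.

Lemma rpow11 : rpow 1 1 = 1.
Proof. rewrite rpow_pos by lra. rewrite ln_1, Rmult_0_r. apply exp_0. Qed.

Lemma rpow22 : rpow 2 2 = 4.
Proof.
unfold rpow. destruct (Req_EM_T 2 0); [lra|].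
replace 2 with (INR 2) at 2 by (simpl; ring).
rewrite Rpower_pow by lra. simpl; ring.
Qed.

Lemma h_zero : h 0 = 4.
Proof.
assert (Hc := Q_cubic 0 ltac:(lra)).
assert (Hu : Qf 0 = 0).
{ destruct (cubic_root_range 0 (Qf 0) ltac:(lra) Hc) as [H _]. auto. }
unfold h, xi. rewrite Hu.
replace (2 - 0) with 2 by ring. replace (1 + 0) with 1 by ring.
replace (3 * 0) with 0 by ring. replace (1 - 0 - 0) with 1 by ring.
replace (0 - 0) with 0 by ring. replace (1 - 0) with 1 by ring.
replace (2 - 2 * 0) with 2 by ring. replace (1 - 2 * 0) with 1 by ring.
rewrite rpow00, rpow11, rpow22. field.
Qed.

Theorem lemma4p4 : forall v : R, 0 <= v < 1/2 -> h v < 2197225 / 100000.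
Proof.
intros v Hv.
destruct (Req_dec v 0) as [Hv0|Hv0].
{ subst v. rewrite h_zero. lra. }
assert (Hvp : 0 < v) by lra.
assert (Hc := Q_cubic v ltac:(lra)).
destruct (cubic_root_range v (Qf v) ltac:(lra) Hc) as [_ Hr].
specialize (Hr Hvp).
set (u := Qf v) in *.
set (F := ((2-u)*ln(2-u) + (1+u)*ln(1+u))
   - (ln 4 + (3*u)*ln u + v*ln v + (1-v-u)*ln(1-v-u) + (v-u)*ln(v-u) + (1-v)*ln(1-v) + (1-u)*ln(1-u))
   + ((2-2*v)*ln(2-2*v) - (1-2*v)*ln(1-2*v))).
assert (HF : h v = exp F).
{ unfold h, xi. fold u. rewrite !rpow_pos by lra.
  replace 4 with (exp (ln 4)) at 1 by (apply exp_ln; lra).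
  unfold F. unfold Rminus.
  repeat (rewrite exp_plus || rewrite exp_Ropp).
  assert (Hne : forall x, exp x <> 0) by (intros; apply Rgt_not_eq, exp_pos).
  field. repeat split; apply Hne. }
assert (L4 : ln 4 = 2 * ln 2).
{ replace 4 with (2*2) by ring. rewrite ln_mult; lra. }
assert (L22 : ln (2 - 2*v) = ln 2 + ln (1 - v)).
{ replace (2 - 2*v) with (2*(1-v)) by ring. rewrite ln_mult; lra. }
assert (HFd : F = 1*(ln (2-u) - ln 1) + (1-u)*(ln (2-u) - ln (1-u))
   + 1*(ln (1+u) - ln 1) + u*(ln (1+u) - ln u) + 2*(u*(ln 1 - ln u))
   + (1-2*v)*(ln (1-v) - ln (1-2*v)) + v*(ln (1-v) - ln v)
   + (1-v-u)*(ln 1 - ln (1-v-u)) + (v-u)*(ln 1 - ln (v-u)) - 2*v*ln 2).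
{ unfold F. rewrite L4, L22, ln_1. ring. }
pose proof (tang 1 (2-u) (175023/100000) (6996840099/12500000000) ltac:(lra) ltac:(lra) ltac:(lra) ln_r1) as T1.
pose proof (tang (1-u) (2-u) (58323/25000) (21178017547/25000000000) ltac:(lra) ltac:(lra) ltac:(lra) ln_r2) as T2.
pose proof (tang 1 (1+u) (124977/100000) (22295953439/100000000000) ltac:(lra) ltac:(lra) ltac:(lra) ln_r3) as T3.
pose proof (tang u (1+u) (31273/6250) (8050868209/5000000000) ltac:(lra) ltac:(lra) ltac:(lra) ln_r4) as T4.
pose proof (tang u 1 (25023/6250) (69360696913/50000000000) ltac:(lra) ltac:(lra) ltac:(lra) ln_r5) as T5.
pose proof (tang (1-2*v) (1-v) (18653/10000) (62342189811/100000000000) ltac:(lra) ltac:(lra) ltac:(lra) ln_r6) as T6.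
pose proof (tang v (1-v) (215567/100000) (15362031603/20000000000) ltac:(lra) ltac:(lra) ltac:(lra) ln_r7) as T7.
pose proof (tang (1-v-u) 1 (115383/50000) (16724680483/20000000000) ltac:(lra) ltac:(lra) ltac:(lra) ln_r8) as T8.
pose proof (tang (v-u) 1 (1489869/100000) (270127328979/100000000000) ltac:(lra) ltac:(lra) ltac:(lra) ln_r9) as T9.
pose proof ln2_bounds as L2.
assert (Hv2 : -2*v*ln 2 <= -2*v*(6931471766/10000000000)).
{ assert (0 <= 2*v) by lra. nra. }
assert (HFb : F < (154489013871/50000000000)) by lra.
rewrite HF. pose proof ln_T.
assert (HE : exp F < exp (ln (87889/4000))) by (apply exp_increasing; lra).
rewrite exp_ln in HE; lra.
Qed.
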